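(* Let $\mathcal{P}=[0,1]^n\cap K$ be a polytope, where $K$ is an affine subspace of $\mathbb{R}^n$, with vertex set $V(\mathcal{P})$. For vertices $v,w\in V(\mathcal{P})$ let $g^{(w)}_v:\mathcal{P}\to[0,1]$ be the coefficient of $v$ in the convex decomposition of $p$ induced by the fan triangulation $\mathcal{T}_w$, and let $$f_v(p)=\frac{1}{|V(\mathcal{P})|}\sum_{w\in V(\mathcal{P})}g^{(w)}_v(p).$$ Then each $f_v$ is polynomially bounded on $\mathcal{P}$.
   Context: Let $d=\dim\mathcal{P}$. For a vertex $w$, the fan triangulation $\mathcal{T}_w$ of $\mathcal{P}$ is the subdivision of $\mathcal{P}$ into simplices with disjoint interiors obtained by first triangulating (arbitrarily) each facet of $\mathcal{P}$ not containing $w$ into $(d-1)$-dimensional simplices (when a facet has more than $d$ vertices), and then taking the convex hull of $w$ with each such $(d-1)$-simplex. Each $p\in\mathcal{P}$ lies in some simplex $T$ of $\mathcal{T}_w$ and has a unique representation as a convex combination of the vertices of $T$; assigning coefficient $0$ to vertices of $\mathcal{P}$ not in $T$ gives a convex decomposition of $p$ into vertices of $\mathcal{P}$ (these agree on common faces of simplices), and $g^{(w)}_v(p)$ is the coefficient of $v$ in it. For a partition $[n]=A\sqcup S\sqcup B$, the open face is $F_{A,S,B}=\{p\in[0,1]^n: p_i=0\ (i\in A),\ 0<p_i<1\ (i\in S),\ p_i=1\ (i\in B)\}$. For $T\subseteq[n]$, $p^T=\prod_{i\in T}p_i$, $(1-p)^T=\prod_{i\in T}(1-p_i)$. A function $h:\mathcal{P}\to[0,1]$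 is polynomially bounded on $\mathcal{P}$ if there exist an integer $m\ge0$ and a real $c>0$ such that for every open face $F_{A,S,B}$: if some $q\in\mathcal{P}\cap F_{A,S,B}$ has $h(q)>0$, then $h(p)\ge c\left((1-p)^A p^S(1-p)^S p^B\right)^m$ for all $p\in\mathcal{P}$. *)

(* Defs.v *)
From HB Require Import structures.
From mathcomp Require Import all_boot all_order all_algebra.
From mathcomp Require Import classical_sets reals.
Set Implicit Arguments. Unset Strict Implicit. Unset Printing Implicit Defensive.
Import Order.TTheory GRing.Theory Num.Theory.
Local Open Scope ring_scope.

Section Defs.
Variables (R : realType) (n : nat).
Notation pt := 'rV[R]_n.

Definition dotp (c x : pt) : R := \sum_(i < n) c ord0 i * x ord0 i.

Definition affine_subspace (K : set pt) : Prop :=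
  forall x y (t : R), K x -> K y -> K ((1 - t) *: x + t *: y).

Definition cube_cap (K : set pt) : set pt :=
  fun p => (forall i, 0 <= p ord0 i <= 1) /\ K p.

Definition is_vertex (X : set pt) (v : pt) : Prop :=
  X v /\ forall x y (t : R), X x -> X y -> 0 < t < 1 ->
    v = (1 - t) *: x + t *: y -> x = y.

Definition aff_indep (s : seq pt) : Prop :=
  uniq s /\ forall lam : pt -> R,
    \sum_(x <- s) lam x *: x = 0 -> \sum_(x <- s) lam x = 0 ->
    forall x, x \in s -> lam x = 0.

(* X has (affine) dimension k (k = -1 for the empty set). *)
Definition has_dim (X : set pt) (k : int) : Prop :=
  (exists s, (forall x, x \in s -> X x) /\ aff_indep s /\ (size s)%:Z = k + 1) /\
  (forall s, (forall x, x \in s -> X x) -> aff_indep s -> (size s)%:Z <= k + 1).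

(* F is a face of X: the intersection of X with a supporting hyperplane
   (c = 0 allowed, giving X itself and the empty face). *)
Definition is_face (X F : set pt) : Prop :=
  exists (c : pt) (b : R), (forall x, X x -> dotp c x <= b) /\
    (forall x, F x <-> X x /\ dotp c x = b).

Definition is_facet (X : set pt) (d : int) (F : set pt) : Prop :=
  is_face X F /\ has_dim F (d - 1).

Definition in_conv (s : seq pt) (x : pt) : Prop :=
  exists lam : pt -> R, (forall y, y \in s -> 0 <= lam y) /\
    \sum_(y <- s) lam y = 1 /\ x = \sum_(y <- s) lam y *: y.

Definition in_relint (s : seq pt) (x : pt) : Prop :=
  exists lam : pt -> R, (forall y, y \in s -> 0 < lam y) /\
    \sum_(y <- s) lam y = 1 /\ x = \sum_(y <- s) lam y *: y.

Definition is_triangulation (X : set pt) (V : seq pt) (d : int) (F : set pt)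
  (Tr : seq (seq pt)) : Prop :=
  [/\ forall S, S \in Tr ->
        [/\ aff_indep S, (size S)%:Z = d & forall y, y \in S -> y \in V /\ F y],
      forall x, F x <-> exists2 S, S \in Tr & in_conv S x
    & forall S S', S \in Tr -> S' \in Tr -> S != S' ->
        forall x, ~ (in_relint S x /\ in_relint S' x)].

(* gw : v -> p -> coefficient is the convex decomposition induced by the fan
   triangulation T_w, for some choice Tri of triangulations of the facets of X
   not containing w. *)
Definition fan_decomposition (X : set pt) (V : seq pt) (d : int) (w : pt)
  (gw : pt -> pt -> R) : Prop :=
  exists Tri : set pt -> seq (seq pt),
    (forall F, is_facet X d F -> ~ F w -> is_triangulation X V d F (Tri F)) /\
    forall p, X p ->
      exists F, [/\ is_facet X d F, ~ F w &
        exists2 S, S \in Tri F &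
          exists lam : pt -> R,
            [/\ forall y, y \in w :: S -> 0 <= lam y,
                \sum_(y <- w :: S) lam y = 1,
                p = \sum_(y <- w :: S) lam y *: y &
                forall v, v \in V -> gw v p = if v \in w :: S then lam v else 0]].

Definition partition3 (A S B : {set 'I_n}) : Prop :=
  [/\ [disjoint A & S], [disjoint A & B], [disjoint S & B] & A :|: S :|: B = [set: 'I_n]%SET].

Definition in_open_face (A S B : {set 'I_n}) (p : pt) : Prop :=
  forall i, [/\ i \in A -> p ord0 i = 0, i \in S -> 0 < p ord0 i < 1
              & i \in B -> p ord0 i = 1].

Definition face_monomial (A S B : {set 'I_n}) (p : pt) : R :=
  (\prod_(i in A) (1 - p ord0 i)) * (\prod_(i in S) p ord0 i) *
  (\prod_(i in S) (1 - p ord0 i)) * (\prod_(i in B) p ord0 i).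

Definition poly_bounded (X : set pt) (h : pt -> R) : Prop :=
  exists (m : nat) (c : R), 0 < c /\
    forall A S B : {set 'I_n}, partition3 A S B ->
      (exists q, [/\ X q, in_open_face A S B q & 0 < h q]) ->
      forall p, X p -> c * (face_monomial A S B p) ^+ m <= h p.

End Defs.

(* Main.v *)
Require Import Defs.
From HB Require Import structures.
From mathcomp Require Import all_boot all_order all_algebra.
From mathcomp Require Import classical_sets reals.
From mathcomp Require Import ring lra.
From Stdlib Require Import Classical.
Import Order.TTheory GRing.Theory Num.Theory.
Local Open Scope ring_scope.

Section Helpers.
Variables (R : realType) (n : nat).
Notation pt := 'rV[R]_n.

Lemma dotpD (c x y : pt) : dotp c (x + y) = dotp c x + dotp c y.
Proof. by rewrite /dotp -big_split /=; apply: eq_bigr => i _; rewrite !mxE mulrDr. Qed.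

Lemma dotpZ (c x : pt) a : dotp c (a *: x) = a * dotp c x.
Proof. by rewrite /dotp mulr_sumr; apply: eq_bigr => i _; rewrite !mxE mulrCA. Qed.

Lemma dotp0 (c : pt) : dotp c 0 = 0.
Proof. by rewrite /dotp big1 // => i _; rewrite mxE mulr0. Qed.

Lemma dotp_sum (c : pt) (s : seq pt) (F : pt -> R) :
  dotp c (\sum_(y <- s) F y *: y) = \sum_(y <- s) F y * dotp c y.
Proof.
elim: s => [|a s IH]; first by rewrite !big_nil dotp0.
by rewrite !big_cons dotpD dotpZ IH.
Qed.

Lemma coord_sum (s : seq pt) (F : pt -> R) i :
  (\sum_(y <- s) F y *: y) ord0 i = \sum_(y <- s) F y * y ord0 i.
Proof. by rewrite summxE; apply: eq_bigr => y _; rewrite mxE. Qed.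

Lemma sum_ge_term (T : eqType) (s : seq T) (F : T -> R) x :
  x \in s -> (forall y, y \in s -> 0 <= F y) -> F x <= \sum_(y <- s) F y.
Proof.
elim: s => [|a s IH] //= Hx Hp; rewrite big_cons.
have Hs : 0 <= \sum_(y <- s) F y.
  rewrite big_seq; apply: sumr_ge0 => y Hy; apply: Hp; by rewrite inE Hy orbT.
have Ha : 0 <= F a by apply: Hp; rewrite inE eqxx.
move: Hx; rewrite inE => /orP [/eqP ->|Hx].
  by rewrite lerDl.
have Hp' : forall y, y \in s -> 0 <= F y by move=> y Hy; apply: Hp; rewrite inE Hy orbT.
have := IH Hx Hp'; lra.
Qed.

Lemma prod_le_factor (P : {set 'I_n}) (F : 'I_n -> R) j :
  j \in P -> (forall i, 0 <= F i <= 1) -> \prod_(i in P) F i <= F j.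
Proof.
move=> Hj H; rewrite (bigD1 j) //=.
have H1 : \prod_(i in P | i != j) F i <= 1 by apply: prodr_ile1.
have H0 : 0 <= \prod_(i in P | i != j) F i by apply: prodr_ge0 => i _; case/andP: (H i).
case/andP: (H j) => ? ?; nra.
Qed.

Lemma prod_01 (P : {set 'I_n}) (F : 'I_n -> R) :
  (forall i, 0 <= F i <= 1) -> 0 <= \prod_(i in P) F i <= 1.
Proof.
move=> H; apply/andP; split; first by apply: prodr_ge0 => i _; case/andP: (H i).
by apply: prodr_ile1.
Qed.


Lemma prod_le_factorT (F : 'I_n -> R) j :
  (forall i, 0 <= F i <= 1) -> \prod_i F i <= F j.
Proof.
move=> H; rewrite (bigD1 j) //=.
have H1 : \prod_(i | i != j) F i <= 1 by apply: prodr_ile1.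
have H0 : 0 <= \prod_(i | i != j) F i by apply: prodr_ge0 => i _; case/andP: (H i).
case/andP: (H j) => ? ?; nra.
Qed.

Lemma key (K : set pt) (p v u c : pt) (b lam : R) :
  affine_subspace K ->
  cube_cap K p -> cube_cap K v ->
  (forall x, cube_cap K x -> dotp c x <= b) ->
  dotp c v != b ->
  0 <= lam < 1 ->
  p = lam *: v + u ->
  dotp c u = (1 - lam) * b ->
  (forall i, 0 <= u ord0 i <= 1 - lam) ->
  exists i, (u ord0 i = 0 /\ 0 < v ord0 i) \/ (u ord0 i = 1 - lam /\ v ord0 i < 1).
Proof.
move=> aff [cp Kp] [cv Kv] Hface Hvb /andP[l0 l1] Hp Hcu Hu.
apply: NNPP => Hn.
have Hall : forall i, (u ord0 i = 0 -> v ord0 i = 0) /\ (u ord0 i = 1 - lam -> v ord0 i = 1).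
  move=> i; have /andP[v0 v1] := cv i; split => Hui.
    apply: NNPP => Hne; apply: Hn; exists i; left; split => //.
    by rewrite lt_neqAle v0 andbT eq_sym; apply/eqP.
  apply: NNPP => Hne; apply: Hn; exists i; right; split => //.
  by rewrite lt_neqAle v1 andbT; apply/eqP.
set mu := 1 - lam.
have mu0 : 0 < mu by rewrite /mu; lra.
set a := fun i => u ord0 i / mu.
set e := fun i => if (0 < a i) && (a i < 1) then a i * (1 - a i) else 1.
have He : forall i, 0 < e i <= 1.
  move=> i; rewrite /e; case: ifP => [/andP[h1 h2]|_]; last by rewrite ltr01 lexx.
  apply/andP; split; nra.
set eps := \prod_i e i.
have eps0 : 0 < eps by apply: prodr_gt0 => i _; case/andP: (He i).
have epsle : forall i, eps <= e i.
  move=> i; apply: prod_le_factorT => j; case/andP: (He j) => h1 h2.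
  by rewrite h2 ltW.
set alpha := (1 + eps) / mu.
set z := (1 - alpha) *: v + alpha *: p.
have Kz : K z by apply: aff.
have Hz : forall i, z ord0 i = - eps * v ord0 i + (1 + eps) * a i.
  move=> i; rewrite /z Hp !mxE /alpha /a /mu; field.
  by apply/eqP; rewrite /mu in mu0; lra.
have cz : cube_cap K z.
  split => // i; rewrite Hz.
  have /andP[v0 v1] := cv i; have /andP[u0 u1] := Hu i.
  have [Hu0|Hu0] := eqVneq (u ord0 i) 0.
    have := (Hall i).1 Hu0; rewrite /a Hu0 => ->; rewrite mul0r; lra.
  have [Hu1|Hu1] := eqVneq (u ord0 i) mu.
    have := (Hall i).2 Hu1 => ->; rewrite /a Hu1 divff; last by rewrite gt_eqF.
    lra.
  have ua : 0 < a i < 1.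
    rewrite /a; apply/andP; split; first by rewrite divr_gt0 // lt_neqAle eq_sym Hu0.
    by rewrite ltr_pdivrMr // mul1r lt_neqAle Hu1.
  have := epsle i; rewrite /e ua => Hle.
  case/andP: ua => a0 a1.
  apply/andP; split; nra.
have := Hface z cz.
have -> : dotp c z = - eps * dotp c v + (1 + eps) * b.
  rewrite /z dotpD !dotpZ Hp dotpD dotpZ Hcu /alpha /mu; field.
  by apply/eqP; lra.
have cvb : dotp c v < b by rewrite lt_neqAle Hvb Hface.
nra.
Qed.


Lemma four_le (a b c d : R) : 0 <= a <= 1 -> 0 <= b <= 1 -> 0 <= c <= 1 -> 0 <= d <= 1 ->
  [/\ a * b * c * d <= a, a * b * c * d <= b, a * b * c * d <= c & a * b * c * d <= d].
Proof.
move=> /andP[a0 a1] /andP[b0 b1] /andP[c0 c1] /andP[d0 d1].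
have h1 : a * b <= a by nra.
have h2 : a * b <= b by nra.
have h0 : 0 <= a * b by nra.
have h3 : a * b * c <= a * b by nra.
have h4 : a * b * c <= c by nra.
have h5 : 0 <= a * b * c by nra.
have h6 : a * b * c * d <= a * b * c by nra.
have h7 : a * b * c * d <= d by nra.
split; lra.
Qed.

Lemma mono_le (A S B : {set 'I_n}) (p : pt) t :
  (forall i, 0 <= p ord0 i <= 1) ->
  (exists i, ((i \in S) || (i \in B)) /\ p ord0 i <= t \/
             ((i \in A) || (i \in S)) /\ 1 - p ord0 i <= t) ->
  face_monomial A S B p <= t.
Proof.
move=> Hp [i Hi]; rewrite /face_monomial.
have H1 : forall j, 0 <= 1 - p ord0 j <= 1.
  by move=> j; have /andP[? ?] := Hp j; apply/andP; split; lra.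
have /andP[a0 a1] := prod_01 A _ H1.
have /andP[b0 b1] := prod_01 S _ Hp.
have /andP[c0 c1] := prod_01 S _ H1.
have /andP[d0 d1] := prod_01 B _ Hp.
have [f1 f2 f3 f4] := four_le _ _ _ _ (prod_01 A _ H1) (prod_01 S _ Hp) (prod_01 S _ H1) (prod_01 B _ Hp).
case: Hi => [[/orP[iS|iB] Hle]|[/orP[iA|iS] Hle]].
- have := prod_le_factor S (fun j => p ord0 j) i iS Hp; lra.
- have := prod_le_factor B (fun j => p ord0 j) i iB Hp; lra.
- have := prod_le_factor A (fun j => 1 - p ord0 j) i iA H1; lra.
- have := prod_le_factor S (fun j => 1 - p ord0 j) i iS H1; lra.
Qed.

End Helpers.

Theorem lemma14 (R : realType) (n : nat) (K : set 'rV[R]_n)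
  (V : seq 'rV[R]_n) (d : int) (g : 'rV[R]_n -> 'rV[R]_n -> 'rV[R]_n -> R) :
  affine_subspace K ->
  uniq V ->
  (forall v, v \in V <-> is_vertex (cube_cap K) v) ->
  has_dim (cube_cap K) d ->
  (forall w, w \in V -> fan_decomposition (cube_cap K) V d w (g w)) ->
  forall v, v \in V ->
    poly_bounded (cube_cap K)
      (fun p => (size V)%:R^-1 * \sum_(w <- V) g w v p).
Proof.
move=> aff uV HV hd Hfan v Vv.
have XV : forall y, y \in V -> cube_cap K y by move=> y /HV [].
have sV : 0 < (size V)%:R :> R by rewrite ltr0n; case: (V) Vv.
exists 1%N, (size V)%:R^-1; split; first by rewrite invr_gt0.
move=> A S B [dAS dAB dSB cov] [q [Xq Fq hq]] p Xp.
rewrite expr1.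
have gnn : forall w x, w \in V -> cube_cap K x -> 0 <= g w v x.
  move=> w x Hw Xx; have [Tri [HTri Hdec]] := Hfan w Hw.
  have [F [HF nFw [S' HS [lam [Hl0 Hl1 Hpe Hg]]]]] := Hdec x Xx.
  by rewrite Hg //; case: ifP => // /Hl0.
have [w [Hw gpos]] : exists w, w \in V /\ 0 < g w v q.
  apply: NNPP => Hn.
  have Hle : \sum_(w <- V) g w v q <= 0.
    rewrite big_seq; apply: sumr_le0 => w Hw.
    rewrite leNgt; apply/negP => Hg; apply: Hn; exists w; split => //.
  have : 0 <= (size V)%:R^-1 :> R by rewrite invr_ge0 ltW.
  move: hq; nra.
have [HA HB] : (forall i, i \in A -> v ord0 i = 0) /\ (forall i, i \in B -> v ord0 i = 1).
  have [Tri [HTri Hdec]] := Hfan w Hw.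
  have [F [HF nFw [S' HS [lam [Hl0 Hl1 Hpe Hg]]]]] := Hdec q Xq.
  move: gpos; rewrite Hg //; case: ifP => [vin lv|_]; last by rewrite ltxx.
  have inV : forall y, y \in w :: S' -> y \in V.
    move=> y; rewrite inE => /orP[/eqP ->//|yS].
    by have [T1 _ _] := HTri F HF nFw; have [_ _ /(_ y yS) []] := T1 S' HS.
  have y01 : forall y i, y \in w :: S' -> 0 <= y ord0 i <= 1.
    by move=> y i /inV /XV [] /(_ i).
  split => i Hi.
  - have [qA _ _] := Fq i; have q0 := qA Hi.
    have := @sum_ge_term R _ (w :: S') (fun y => lam y * y ord0 i) v vin.
    have /andP[v0 v1] := y01 v i vin.
    rewrite -coord_sum -Hpe q0 => H.
    have : lam v * v ord0 i <= 0.
      apply: H => y Hy; have /andP[? ?] := y01 y i Hy; apply: mulr_ge0 => //; exact: Hl0.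
    nra.
  - have [_ _ qB] := Fq i; have q1 := qB Hi.
    have := @sum_ge_term R _ (w :: S') (fun y => lam y * (1 - y ord0 i)) v vin.
    have /andP[v0 v1] := y01 v i vin.
    have -> : \sum_(y <- w :: S') lam y * (1 - y ord0 i) = 0.
      under eq_bigr => y _ do rewrite mulrBr mulr1.
      by rewrite sumrB Hl1 -coord_sum -Hpe q1 subrr.
    move=> H.
    have : lam v * (1 - v ord0 i) <= 0.
      apply: H => y Hy; have /andP[? ?] := y01 y i Hy; apply: mulr_ge0; [exact: Hl0|lra].
    nra.
have [Tri [HTri Hdec]] := Hfan v Vv.
have [F [HF nFv [S' HS [lam [Hl0 Hl1 Hpe Hg]]]]] := Hdec p Xp.
have gvv : g v v p = lam v by rewrite Hg // mem_head.
have [T1 _ _] := HTri F HF nFv.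
have inS : forall y, y \in S' -> y \in V /\ F y by move=> y yS; have [_ _ /(_ y yS)] := T1 S' HS.
have [[c [b [Hcb HFiff]]] _] := HF.
set u := \sum_(y <- S') lam y *: y.
have Hp : p = lam v *: v + u by rewrite Hpe big_cons.
have Hsum : lam v + \sum_(y <- S') lam y = 1 by rewrite -Hl1 big_cons.
have Hs0 : 0 <= \sum_(y <- S') lam y.
  rewrite big_seq; apply: sumr_ge0 => y yS; apply: Hl0; by rewrite inE yS orbT.
have l0 : 0 <= lam v by apply: Hl0; rewrite mem_head.
have Hcu : dotp c u = (1 - lam v) * b.
  rewrite /u dotp_sum.
  have -> : 1 - lam v = \sum_(y <- S') lam y by lra.
  rewrite mulr_suml big_seq [RHS]big_seq; apply: eq_bigr => y yS.
  by have [_ /HFiff [_ ->]] := inS y yS.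
have Hu : forall i, 0 <= u ord0 i <= 1 - lam v.
  move=> i; rewrite /u coord_sum; apply/andP; split.
    rewrite big_seq; apply: sumr_ge0 => y yS.
    have [/XV [/(_ i) /andP[? ?] _] _] := inS y yS.
    apply: mulr_ge0 => //; apply: Hl0; by rewrite inE yS orbT.
  have -> : 1 - lam v = \sum_(y <- S') lam y by lra.
  rewrite big_seq [X in _ <= X]big_seq; apply: ler_sum => y yS.
  have [/XV [/(_ i) /andP[? ?] _] _] := inS y yS.
  have : 0 <= lam y by apply: Hl0; rewrite inE yS orbT.
  nra.
have Hvb : dotp c v != b.
  apply/negP => /eqP Hcv; apply: nFv; apply/HFiff; split => //; exact: XV.
have Xv := XV v Vv.
have cubep : forall i, 0 <= p ord0 i <= 1 by case: Xp.
have Hmono : face_monomial A S B p <= lam v.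
  have [l1|l1] := eqVneq (lam v) 1.
    rewrite l1 /face_monomial.
    have H1 : forall j, 0 <= 1 - p ord0 j <= 1.
      by move=> j; have /andP[? ?] := cubep j; apply/andP; split; lra.
    have [f1 _ _ _] := @four_le R _ _ _ _ (@prod_01 R n A _ H1) (@prod_01 R n S _ cubep)
      (@prod_01 R n S _ H1) (@prod_01 R n B _ cubep).
    have /andP[_ a1] := @prod_01 R n A _ H1.
    exact: le_trans f1 a1.
  have l1' : lam v < 1 by rewrite lt_neqAle l1 /=; lra.
  have [i Hi] := @key R n K p v u c b (lam v) aff Xp Xv Hcb Hvb
    (introT andP (conj l0 l1')) Hp Hcu Hu.
  apply: mono_le => //; exists i.
  have pi : p ord0 i = lam v * v ord0 i + u ord0 i by rewrite Hp !mxE.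
  have /andP[v0 v1] : 0 <= v ord0 i <= 1 by case: Xv => /(_ i).
  have : i \in A :|: S :|: B by rewrite cov inE.
  rewrite !inE => Hin.
  case: Hi => [[u0 vpos]|[u1 vlt]].
  - left; split.
      case/orP: Hin => [/orP[iA|->//]|->]; last by rewrite orbT.
      by move: vpos; rewrite HA // ltxx.
    rewrite pi u0; nra.
  - right; split.
      case/orP: Hin => [/orP[->//|->]|iB]; first by rewrite orbT.
      by move: vlt; rewrite HB // ltxx.
    rewrite pi u1; nra.
apply: ler_wpM2l; first by rewrite invr_ge0 ltW.
apply: (le_trans Hmono); rewrite -gvv.
by apply: sum_ge_term => // w' Hw'; apply: gnn.
Qed.
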